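(* Let particles occupy a finite connected set of nodes of the triangular grid, where every particle has ports $0,\dots,5$ with port $0$ leading East and port $3$ leading West for all particles, and ports $i$, $i+1 \bmod 6$ leading to adjacent nodes, the circular orientation of the other ports possibly differing between particles. Let $G$ be a grey component, and let $\{p,p'\}$ be a pair of particles of $G$ that are neighbours on at least one boundary of $G$, where boundaries of $G$ are taken with both endpoints of every dark blue edge treating the other endpoint as a non-particle node. Suppose every particle forwards messages along boundaries by the following procedure. If $p_s,p_1,p_2$ are consecutive particles on a boundary $B$, $o_1$ is the common non-particle neighbour of $p_s,p_1$ on $B$ and $o_2$ the common non-particle neighbour of $p_1,p_2$ on $B$, then when $p_s$ sends a message to $p_1$ it attaches as boundary-label the label, in $p_1$'s own port numbering, of the port of $p_1$ leading to $o_1$. When $p_1$ receives the message through its port $z$, it takes as next particle the first particle reached when following its ports in the cyclic order $z$, boundary-label, $\dots$ (call it $p_2$); it determines whether it has the same chirality as $p_2$ (via port labels of the edge $p_1p_2$ if it is a grey edge, or via the common occupied neighbour if it is a light blue edge). Letting $x$ be the port of $p_1$ to $p_2$, $y$ the port of $p_2$ to $p_1$, and $i$ the port of $p_1$ to $o_2$, $p_1$ computes $j = y+1 \bmod 6$ if ($p_1,p_2$ have the same chirality and $i = x-1 \bmod 6$) or (they have different chirality and $i = x+1 \bmod 6$), and $j = y-1 \bmod 6$ otherwise; it then sends the message to $p_2$ with boundary-label $j$. A particle originating a message chooses the boundary on which it sends it and attaches the boundary-label accordingly. Then any message passed from $p$ to $p'$ by this procedure always remains on the same boundary, i.e., the boundary-label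 received by $p'$ is the label (in $p'$'s numbering) of the port of $p'$ leading to the common non-particle neighbour of $p$ and $p'$ defining the boundary on which the message is being forwarded.
   Context: A local boundary is a pair $(uv,o)$ where $uv$ is an edge between particle nodes and $o$ is a non-particle node adjacent to both $u$ and $v$. A boundary is a cyclic sequence of local boundaries $(u_1u_2,o_1),(u_2u_3,o_2),\dots,(u_ku_1,o_k)$ such that, rotating around $u_i$ from $u_{i-1}$ to $u_{i+1}$, only non-particle nodes are encountered, starting with $o_{i-1}$ and ending with $o_i$ (possibly $o_{i-1}=o_i$); $u,v$ with $(uv,o)$ on it are neighbours on the boundary. A horizontal path consists of particles that lie on at least one boundary and are connected through their ports $0$ and $3$. An edge of a horizontal path between two particles with no common neighbouring particle is a dark blue edge; an edge of a horizontal path between two particles with exactly one common neighbouring particle is a light blue edge; all other edges between particles are grey edges. A grey component is a maximal set of particles connected by grey and light blue edges (not using dark blue edges). Two particles joined by a grey edge through ports $i$ and $i'$ have the same chirality iff $i+3 \equiv i' \pmod 6$. *)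

(* Defs.v *)
From HB Require Import structures.
From mathcomp Require Import all_boot all_order all_algebra.
From mathcomp Require Import boolp.
Set Implicit Arguments. Unset Strict Implicit. Unset Printing Implicit Defensive.
Import Order.TTheory GRing.Theory Num.Theory.
Local Open Scope ring_scope.

(* Nodes of the triangular grid in axial coordinates. *)
Definition node := (int * int)%type.

(* The six directions, counterclockwise starting from East:
   0 = E, 1 = NE, 2 = NW, 3 = W, 4 = SW, 5 = SE. *)
Definition dir (d : 'I_6) : int * int :=
  match val d with
  | 0%N => (1, 0) | 1%N => (0, 1) | 2%N => (-1, 1)
  | 3%N => (-1, 0) | 4%N => (0, -1) | _ => (1, -1)
  end.

Definition addN (u : node) (d : 'I_6) : node := (u.1 + (dir d).1, u.2 + (dir d).2).

Definition adj (u v : node) : bool := [exists d : 'I_6, v == addN u d].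

(* the direction d with v = u + dir d (junk 0 if not adjacent) *)
Definition dirTo (u v : node) : 'I_6 := odflt 0 [pick d : 'I_6 | v == addN u d].

Definition rotN (c : node) (d : 'I_6) (s : bool) (t : nat) : node :=
  addN c (d + (if s then t%:R else - t%:R)).

Section Boundaries.
(* S : the particle nodes; occ u v : node v is seen as a particle by u. *)
Variables (S : seq node) (occ : node -> node -> bool).

Definition localBoundary (u v o : node) : bool :=
  [&& u \in S, v \in S, adj u v, occ u v, occ v u,
      adj u o, adj v o, ~~ occ u o & ~~ occ v o].

(* a boundary is a cyclic sequence [(u_1,o_1); ...; (u_k,o_k)] standing for
   the local boundaries (u_1u_2,o_1), ..., (u_ku_1,o_k) *)
Definition bu (B : seq (node * node)) (j : nat) : node :=
  (nth (0, 0) B (j %% size B)).1.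
Definition bo (B : seq (node * node)) (j : nat) : node :=
  (nth (0, 0) B (j %% size B)).2.

Definition isBoundary (B : seq (node * node)) : Prop :=
  (0 < size B)%N /\
  forall j, (j < size B)%N ->
    localBoundary (bu B j) (bu B j.+1) (bo B j) /\
    (* rotating around u_{j+1} from u_j to u_{j+2}: only non-particle nodes,
       starting with o_j and ending with o_{j+1} *)
    exists (s : bool) (m : nat),
      (2 <= m <= 6)%N /\
      let c := bu B j.+1 in let d := dirTo c (bu B j) in
      [/\ rotN c d s 1 = bo B j, rotN c d s m.-1 = bo B j.+1,
          rotN c d s m = bu B j.+2 &
          forall t, (1 <= t < m)%N -> ~~ occ c (rotN c d s t)].

Definition onBoundary (u : node) : Prop :=
  exists B, isBoundary B /\ exists2 j, (j < size B)%N & bu B j = u.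

End Boundaries.

Section Particles.
(* P : the particles; portDir u k : the direction of the node port k of u
   leads to. *)
Variables (P : seq node) (portDir : node -> 'I_6 -> 'I_6).

Definition nbp (u : node) (k : 'I_6) : node := addN u (portDir u k).

(* the port of u leading to v (junk 0 if none) *)
Definition portTo (u v : node) : 'I_6 := odflt 0 [pick k : 'I_6 | nbp u k == v].

(* boundaries of the whole configuration *)
Definition fullOcc (_ v : node) : bool := v \in P.

Definition horizEdge (u v : node) : Prop :=
  [/\ u \in P, v \in P, onBoundary P fullOcc u, onBoundary P fullOcc v &
      (nbp u 0 == v) && (nbp v 3 == u) \/ (nbp v 0 == u) && (nbp u 3 == v)].

Definition ncommon (u v : node) : nat :=
  count (fun w => adj u w && adj v w) (undup P).

Definition darkBlue (u v : node) : Prop := horizEdge u v /\ ncommon u v = 0%N.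
Definition lightBlue (u v : node) : Prop := horizEdge u v /\ ncommon u v = 1%N.

(* G is a grey component: a maximal set of particles connected by grey and
   light blue edges, i.e. by edges between particles that are not dark blue *)
Definition nonDarkEdge (G : seq node) (u v : node) : Prop :=
  [/\ u \in G, v \in G, adj u v & ~ darkBlue u v].

Definition greyComponent (G : seq node) : Prop :=
  [/\ G != [::], {subset G <= P},
      (forall u v, u \in G -> v \in G ->
         exists s : seq node,
           [/\ all (fun w => w \in G) s,
               (forall k, (k < size s)%N ->
                  ~ darkBlue (nth u (u :: s) k) (nth u s k)
                  /\ adj (nth u (u :: s) k) (nth u s k)) &
               last u s = v]) &
      (forall u v, u \in G -> v \in P -> adj u v -> ~ darkBlue u v -> v \in G)].

Variable G : seq node.

(* boundaries of G: both endpoints of a dark blue edge see each other as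
   non-particle nodes *)
Definition occG (u v : node) : bool :=
  (v \in G) && ~~ `[< darkBlue u v >].

(* chirality test through a grey edge *)
Definition greyTest (a b : node) : bool := portTo a b + 3 == portTo b a.

(* message state: (sender, receiver, boundary-label) *)
Definition msg := (node * node * 'I_6)%type.

Definition step (st : msg) : msg :=
  let: (ps, p1, lbl) := st in
  let z := portTo p1 ps in
  let sg := lbl - z in                      (* direction of the cyclic order *)
  let portAt (t : nat) := z + sg *+ t in    (* z, label, ... *)
  let t := (find (fun t => occG p1 (nbp p1 (portAt t))) (iota 1 6)).+1 in
  let x := portAt t in
  let p2 := nbp p1 x in
  let y := portTo p2 p1 in
  let i := portAt t.-1 in                   (* port of p1 to o2 *)
  let same :=
    if `[< lightBlue p1 p2 >] then
      let w := if nbp p1 (x + 1) \in P then nbp p1 (x + 1) else nbp p1 (x - 1) in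
      greyTest p1 w == greyTest w p2
    else greyTest p1 p2 in
  let j := if (same && (i == x - 1)) || (~~ same && (i == x + 1))
           then y + 1 else y - 1 in
  (p1, p2, j).

Definition initMsg (B : seq (node * node)) (i0 : nat) : msg :=
  (bu B i0, bu B i0.+1, portTo (bu B i0.+1) (bo B i0)).

Fixpoint traj (st : msg) (n : nat) : msg :=
  if n is n'.+1 then step (traj st n') else st.

End Particles.

Definition configOK (P : seq node) (portDir : node -> 'I_6 -> 'I_6) : Prop :=
  [/\ P != [::],
      (forall u v, u \in P -> v \in P ->
         exists s : seq node,
           [/\ all (fun w => w \in P) s, path adj u s & last u s = v]),
      (forall u, u \in P -> injective (portDir u)),
      (forall u, u \in P -> portDir u 0 = 0 /\ portDir u 3 = 3) &
      (forall u, u \in P -> forall k : 'I_6, adj (nbp portDir u k) (nbp portDir u (k + 1)))].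

(* Submission.v *)
Require Import Defs.
From mathcomp Require Import all_boot all_order all_algebra.
From mathcomp Require Import ring zify boolp.
Set Implicit Arguments. Unset Strict Implicit. Unset Printing Implicit Defensive.

Module Aux.
Import GRing.Theory.
Local Open Scope ring_scope.

Ltac ord6 a := case: a => [[|[|[|[|[|[|?]]]]]] ?] //.

Definition comb (a b c : 'I_6) : bool :=
  ((dir a).1 + (dir b).1 == (dir c).1) && ((dir a).2 + (dir b).2 == (dir c).2).

Lemma addN2 v a b c : (addN (addN v a) b == addN v c) = comb a b c.
Proof.
rewrite /addN /comb xpair_eqE /= -!addrA.
by rewrite !(inj_eq (addrI _)).
Qed.

Lemma dir_eq a b : (((dir a).1 == (dir b).1) && ((dir a).2 == (dir b).2)) = (a == b).
Proof. by ord6 a; ord6 b. Qed.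

Lemma addN_eq v a b : (addN v a == addN v b) = (a == b).
Proof.
by rewrite /addN xpair_eqE /= !(inj_eq (addrI _)) dir_eq.
Qed.

Lemma addN_inj v : injective (addN v).
Proof. by move=> a b /eqP; rewrite addN_eq => /eqP. Qed.

Lemma comb_adj a e b : comb a e b -> (b == a + 1) || (b == a - 1).
Proof. by ord6 a; ord6 e; ord6 b. Qed.

Lemma comb_p1 a : comb a (a + 2) (a + 1).
Proof. by ord6 a. Qed.
Lemma comb_m1 a : comb a (a - 2) (a - 1).
Proof. by ord6 a. Qed.

Lemma adjE u w : adj u w <-> exists d, w = addN u d.
Proof.
split; first by move/existsP=> [d /eqP ->]; exists d.
by move=> [d ->]; apply/existsP; exists d.
Qed.

Lemma adj_self v a : adj v (addN v a).
Proof. by apply/adjE; exists a. Qed.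

Lemma adj_addN v a b : adj (addN v a) (addN v b) = (b == a + 1) || (b == a - 1).
Proof.
apply/idP/idP.
  by move/existsP=> [e]; rewrite eq_sym addN2 => /comb_adj.
case/orP=> /eqP ->; apply/existsP.
  by exists (a + 2); rewrite eq_sym addN2 comb_p1.
by exists (a - 2); rewrite eq_sym addN2 comb_m1.
Qed.

Lemma addN_back v a : addN (addN v a) (a + 3) = v.
Proof.
case: v => v1 v2; rewrite /addN /= -!addrA.
have -> : (dir a).1 + (dir (a + 3)).1 = 0 by apply/eqP; ord6 a.
have -> : (dir a).2 + (dir (a + 3)).2 = 0 by apply/eqP; ord6 a.
by rewrite !addr0.
Qed.

Lemma dirTo_addN v a : dirTo v (addN v a) = a.
Proof.
rewrite /dirTo; case: pickP => [d|/(_ a)]; last by rewrite eqxx.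
by rewrite addN_eq => /eqP.
Qed.

Lemma adj_sym u v : adj u v -> adj v u.
Proof. by case/adjE=> a ->; apply/adjE; exists (a + 3); rewrite addN_back. Qed.

Lemma adj_dirTo u v : adj v u -> u = addN v (dirTo v u).
Proof. by case/adjE=> a ->; rewrite dirTo_addN. Qed.

Lemma adj_irr v : ~~ adj v v.
Proof.
apply/negP => /adjE [a] /esym /eqP.
case: v => v1 v2; rewrite /addN xpair_eqE /=.
rewrite -{2}[v1]addr0 -{2}[v2]addr0 !(inj_eq (addrI _)).
by ord6 a.
Qed.

Lemma common_nb v D w : adj v w -> adj (addN v D) w ->
  w = addN v (D + 1) \/ w = addN v (D - 1).
Proof.
case/adjE=> a ->; rewrite adj_addN.
by case/orP=> /eqP ->; [left|right].
Qed.

Definition sgn (s : bool) : 'I_6 := if s then 1 else -1.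

Lemma rotNE c d s t : rotN c d s t = addN c (d + sgn s * t%:R).
Proof. by rewrite /rotN /sgn; case: s; rewrite ?mul1r ?mulN1r. Qed.

Lemma sgn_sq s : sgn s * sgn s = 1.
Proof. by case: s; rewrite /sgn ?mulr1 ?mulrNN ?mulr1. Qed.

Lemma comb_back D s : comb D (D + 3 + sgn s) (D - sgn s).
Proof. by case: s; ord6 D. Qed.

Lemma comb_w D s : comb (D + sgn s) (D - sgn s) D.
Proof. by case: s; ord6 D. Qed.


Definition pm1 (e : 'I_6) : bool := (e == 1) || (e == -1).

Lemma pm1_sq e : pm1 e -> e * e = 1.
Proof. by case/orP=> /eqP ->; rewrite ?mulr1 ?mulrNN ?mulr1. Qed.

Lemma pm1_sgn s : pm1 (sgn s).
Proof. by case: s; rewrite /pm1 /sgn eqxx ?orbT. Qed.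

Lemma port_brute (a1 a2 a4 a5 : 'I_6) :
  (a1 == 0 + 1) || (a1 == 0 - 1) -> (a2 == a1 + 1) || (a2 == a1 - 1) ->
  (3 == a2 + 1) || (3 == a2 - 1) -> (a4 == 3 + 1) || (a4 == 3 - 1) ->
  (a5 == a4 + 1) || (a5 == a4 - 1) -> (0 == a5 + 1) || (0 == a5 - 1) ->
  a2 != a4 -> [&& pm1 a1, a2 == a1 * 2, a4 == a1 * 4 & a5 == a1 * 5].
Proof. by ord6 a1; ord6 a2; ord6 a4; ord6 a5. Qed.

Lemma portLin (pi : 'I_6 -> 'I_6) : injective pi -> pi 0 = 0 -> pi 3 = 3 ->
  (forall k, (pi (k + 1) == pi k + 1) || (pi (k + 1) == pi k - 1)) ->
  pm1 (pi 1) /\ forall k, pi k = pi 1 * k.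
Proof.
move=> inj p0 p3 H.
have h0 := H 0; have h1 := H 1; have h2 := H 2; have h3 := H 3; have h4 := H 4; have h5 := H 5.
rewrite (_ : (0 + 1 : 'I_6) = 1) ?p0 in h0; last by apply/val_inj.
rewrite (_ : (1 + 1 : 'I_6) = 2) in h1; last by apply/val_inj.
rewrite (_ : (2 + 1 : 'I_6) = 3) ?p3 in h2; last by apply/val_inj.
rewrite (_ : (3 + 1 : 'I_6) = 4) ?p3 in h3; last by apply/val_inj.
rewrite (_ : (4 + 1 : 'I_6) = 5) in h4; last by apply/val_inj.
rewrite (_ : (5 + 1 : 'I_6) = 0) ?p0 in h5; last by apply/val_inj.
have n24 : pi 2 != pi 4 by rewrite (inj_eq inj).
case/and4P: (port_brute h0 h1 h2 h3 h4 h5 n24) => e1 /eqP e2 /eqP e4 /eqP e5.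
split=> // k.
rewrite -[k]natr_Zp.
case: k => [[|[|[|[|[|[|i]]]]]] Hi] //=.
- by rewrite mulr0 p0.
- by rewrite mulr1.
- by rewrite p3; move: e1 {e2 e4 e5} => /orP [] /eqP ->; apply/val_inj.
Qed.

Lemma portTo_lin (pd : node -> 'I_6 -> 'I_6) u e (eps : 'I_6) : pm1 eps ->
  (forall k, pd u k = eps * k) -> portTo pd u (addN u e) = eps * e.
Proof.
move=> pe H; rewrite /portTo; case: pickP => [k | /(_ (eps * e))].
  by rewrite /nbp H addN_eq => /eqP <-; rewrite mulrA pm1_sq // mul1r.
by rewrite /nbp H mulrA pm1_sq // mul1r eqxx.
Qed.

Lemma grey_brute ea eb e : pm1 ea -> pm1 eb -> e != 0 -> e != 3 ->
  (ea * e + 3 == eb * (e + 3)) = (ea == eb).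
Proof. by case/orP=> /eqP ->; case/orP=> /eqP ->; ord6 e. Qed.

Lemma final_brute e1 e2 sg D : pm1 e1 -> pm1 e2 -> pm1 sg ->
  (if ((e1 == e2) && (e1 * (D - sg) == e1 * D - 1)) ||
      (~~ (e1 == e2) && (e1 * (D - sg) == e1 * D + 1))
   then e2 * (D + 3) + 1 else e2 * (D + 3) - 1) == e2 * (D + 3 + sg).
Proof.
by case/orP=> /eqP ->; case/orP=> /eqP ->; case/orP=> /eqP ->; ord6 D.
Qed.

Lemma same_brute e1 ew e2 : pm1 e1 -> pm1 ew -> pm1 e2 ->
  ((e1 == ew) == (ew == e2)) = (e1 == e2).
Proof. by case/orP=> /eqP ->; case/orP=> /eqP ->; case/orP=> /eqP ->. Qed.


Lemma find_spec (a : pred nat) : a 6%N ->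
  [/\ (1 <= (find a (iota 1 6)).+1 <= 6)%N, a (find a (iota 1 6)).+1 &
      forall t, (1 <= t < (find a (iota 1 6)).+1)%N -> ~~ a t].
Proof.
move=> a6.
have hs : has a (iota 1 6) by apply/hasP; exists 6%N.
have lt6 : (find a (iota 1 6) < 6)%N by rewrite -(size_iota 1 6) -has_find.
split.
- by rewrite ltnS lt6.
- by have := nth_find 0%N hs; rewrite nth_iota // add1n.
- move=> t /andP[t1 tlt].
  have := @before_find _ 0%N a (iota 1 6) t.-1.
  rewrite nth_iota; last by lia.
  rewrite add1n prednK // => -> //; lia.
Qed.

Lemma find_iota (a : pred nat) m : (1 <= m <= 6)%N -> a m ->
  (forall t, (1 <= t < m)%N -> ~~ a t) -> (find a (iota 1 6)).+1 = m.
Proof.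
move=> /andP[m1 m6] am H.
have hs : has a (iota 1 6) by apply/hasP; exists m => //; rewrite mem_iota m1 ltnS.
have lt6 : (find a (iota 1 6) < 6)%N by rewrite -(size_iota 1 6) -has_find.
case: (ltngtP (find a (iota 1 6)) m.-1) => h.
- have := nth_find 0%N hs; rewrite nth_iota // add1n => af.
  have : ~~ a (find a (iota 1 6)).+1 by apply: H; lia.
  by rewrite af.
- have := @before_find _ 0%N a (iota 1 6) m.-1 h.
  rewrite nth_iota ?add1n ?prednK ?am //; lia.
- by rewrite h prednK.
Qed.


Lemma natm1 (m : nat) : (1 <= m)%N -> (m.-1)%:R = m%:R - 1 :> 'I_6.
Proof. by move=> m1; rewrite -subn1 natrB. Qed.

Lemma six0 : (6%:R : 'I_6) = 0.
Proof. by apply/val_inj. Qed.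

Lemma cycle_ex (T : eqType) (L : seq T) (V : pred T) (f g : T -> T) :
  (forall x, V x -> x \in L) -> (forall x, V x -> V (f x)) ->
  (forall x, V x -> g (f x) = x) ->
  forall x, V x -> exists2 k, (0 < k)%N & iter k f x = x.
Proof.
move=> VL Vf gf x Vx.
have Vi i : V (iter i f x) by elim: i => //= i IH; apply: Vf.
pose s := [seq iter i f x | i <- iota 0 (size L).+1].
have : ~~ uniq s.
  apply/negP => us.
  have := uniq_leq_size us.
  have sub : {subset s <= L} by move=> y /mapP [i _ ->]; apply: VL.
  by move/(_ L sub); rewrite size_map size_iota ltnn.
case/(uniqPn x) => i [j [ij js]].
rewrite size_map size_iota in js.
rewrite !(nth_map 0%N) ?size_iota //; last by lia.
rewrite !nth_iota ?add0n //; last by lia.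
have claim : forall i', iter i' f x = iter (i' + (j - i)) f x -> x = iter (j - i) f x.
  elim=> [|i' IH]; first by rewrite add0n.
  rewrite addSn !iterS => /(congr1 g); rewrite !gf //.
move=> E; exists (j - i)%N; first by lia.
by apply/esym/(claim i); rewrite subnKC // ltnW.
Qed.

Section Bnd.
Variable P : seq node.

Definition fstep (x : node * node * node) : node * node * node :=
  let: (u, v, o) := x in
  let d := dirTo v u in let s := o == addN v (d + 1) in
  let m := (find (fun t => rotN v d s t \in P) (iota 1 6)).+1 in
  (v, rotN v d s m, rotN v d s m.-1).

Definition gstep (x : node * node * node) : node * node * node :=
  let: (v, w, o) := x in
  let e := dirTo v w in let s := o == addN v (e - 1) in
  let m := (find (fun t => rotN v e (~~ s) t \in P) (iota 1 6)).+1 in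
  (rotN v e (~~ s) m, v, rotN v e (~~ s) m.-1).

Definition Valid (x : node * node * node) : bool :=
  let: (u, v, o) := x in
  [&& u \in P, v \in P & [&& adj u v, adj u o, adj v o & o \notin P]].

Lemma fspec u v o : Valid (u, v, o) -> exists d s m,
  [/\ fstep (u, v, o) = (v, rotN v d s m, rotN v d s m.-1),
      u = addN v d, o = rotN v d s 1, (2 <= m <= 6)%N &
      rotN v d s m \in P /\ forall t, (1 <= t < m)%N -> rotN v d s t \notin P].
Proof.
move=> /and3P[uP vP /and4P[auv auo avo onP]].
pose d := dirTo v u.
have ud : u = addN v d by apply: adj_dirTo; apply: adj_sym.
pose s := o == addN v (d + 1).
have o1 : o = rotN v d s 1.
  rewrite rotNE mulr1 /s /sgn; case: eqP => // /eqP ne.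
  move: avo auo => /adjE [a ao]; rewrite ud ao adj_addN.
  case/orP=> /eqP ad; last by rewrite ad.
  by move: ne; rewrite ao ad => /eqP.
pose m := (find (fun t => rotN v d s t \in P) (iota 1 6)).+1.
have a6 : rotN v d s 6 \in P by rewrite rotNE six0 mulr0 addr0 -ud.
have [hm am bm] := @find_spec (fun t => rotN v d s t \in P) a6.
exists d, s, m; split => //.
rewrite -/m in hm am bm; case/andP: hm => m1 m6; rewrite m6 andbT.
rewrite ltn_neqAle m1 andbT; apply/eqP => e; move: am.
by rewrite -e -o1 (negbTE onP).
Qed.


Lemma sgnN s : sgn (~~ s) = - sgn s.
Proof. by case: s; rewrite /sgn ?opprK. Qed.

Lemma valid_f x : Valid x -> Valid (fstep x).
Proof.
case: x => [[u v] o] V.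
have [d [s [m [-> ud o1 /andP[m2 m6] [wP bm]]]]] := fspec V.
move: V => /and3P[uP vP _].
rewrite /Valid /= vP wP /= !rotNE !adj_self /=.
have E : d + sgn s * (m.-1)%:R = (d + sgn s * m%:R) - sgn s.
  by rewrite natm1 ?(ltnW m2) //; ring.
rewrite E adj_addN; apply/andP; split.
  by case: (s); rewrite /sgn ?opprK eqxx ?orbT.
rewrite -E -rotNE; apply: bm; lia.
Qed.

Lemma gf x : Valid x -> gstep (fstep x) = x.
Proof.
case: x => [[u v] o] V.
have [d [s [m [-> ud o1 /andP[m2 m6] [wP bm]]]]] := fspec V.
move: V => /and3P[uP vP _].
have hs : forall D', (D' - sgn s == D' - 1) = s.
  by case: (s) => D'; rewrite /sgn ?eqxx //; ord6 D'.
set D := d + sgn s * m%:R.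
have wD : rotN v d s m = addN v D by rewrite rotNE.
have oD : rotN v d s m.-1 = addN v (D - sgn s).
  by rewrite rotNE natm1 ?(ltnW m2) // /D; congr addN; ring.
have key t : (t <= m)%N -> rotN v D (~~ s) t = rotN v d s (m - t).
  by move=> tm; rewrite !rotNE natrB // sgnN /D; congr addN; ring.
have fm : (find (fun t => rotN v D (~~ s) t \in P) (iota 1 6)).+1 = m.
  apply: (@find_iota (fun t => rotN v D (~~ s) t \in P)).
  - lia.
  - rewrite key; last by lia.
    by rewrite subnn rotNE mulr0 addr0 -ud.
  - move=> t /andP[t1 tm]; rewrite key; last by lia.
    apply: bm; lia.
rewrite /gstep wD oD dirTo_addN addN_eq hs fm.
rewrite key; last by lia.
rewrite key; last by lia.
rewrite subnn rotNE mulr0 addr0 -ud.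
by rewrite (_ : (m - m.-1 = 1)%N) -?o1 //; lia.
Qed.


Lemma bnd_exists u v o : Valid (u, v, o) ->
  onBoundary P (fullOcc P) u /\ onBoundary P (fullOcc P) v.
Proof.
move=> V0.
pose L := [seq (x, addN x.2 a) | x <- [seq (a, b) | a <- P, b <- P], a <- enum 'I_6].
have VL x : Valid x -> x \in L.
  case: x => [[a b] c] /and3P[aP bP /and4P[_ _ /adjE[e ->] _]].
  apply: (allpairs_f (fun x a => (x, addN x.2 a))); last by rewrite mem_enum.
  exact: allpairs_f.
have [k k0 Xk] := cycle_ex VL valid_f gf V0.
pose X i := iter i fstep (u, v, o).
have Vi i : Valid (X i) by elim: i => //= i IH; apply: valid_f.
have Xq q : X (q * k)%N = (u, v, o).
  elim: q => // q IH; rewrite /X mulSn iterD.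
  by rewrite -/(X (q * k)%N) IH Xk.
have per i : X (i %% k)%N = X i.
  rewrite {2}(divn_eq i k) /X addnC iterD.
  by rewrite -/(X (i %/ k * k)%N) Xq.
pose B := [seq ((X i).1.1, (X i).2) | i <- iota 0 k].
have sB : size B = k by rewrite size_map size_iota.
have buE j : bu B j = (X j).1.1.
  rewrite /bu sB (nth_map 0%N) ?size_iota ?ltn_pmod //.
  by rewrite nth_iota ?ltn_pmod // add0n per.
have boE j : bo B j = (X j).2.
  rewrite /bo sB (nth_map 0%N) ?size_iota ?ltn_pmod //.
  by rewrite nth_iota ?ltn_pmod // add0n per.
have XS j : (X j.+1).1.1 = (X j).1.2.
  by rewrite /X iterS; case: (iter j fstep (u, v, o)) => [[a b] c].
have XS2 j : X j.+1 = fstep (X j) by rewrite /X iterS.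
have isB : isBoundary P (fullOcc P) B.
  split; first by rewrite sB.
  move=> j _.
  case Ex: (X j) => [[a b] c].
  have Vj : Valid (a, b, c) by rewrite -Ex.
  have [d [s [m [fE ud o1 hm [wP bm]]]]] := fspec Vj.
  have X1 : X j.+1 = (b, rotN b d s m, rotN b d s m.-1) by rewrite XS2 Ex fE.
  have bj : bu B j = a by rewrite buE Ex.
  have bj1 : bu B j.+1 = b by rewrite buE X1.
  have bj2 : bu B j.+2 = rotN b d s m by rewrite buE XS X1.
  have oj : bo B j = c by rewrite boE Ex.
  have oj1 : bo B j.+1 = rotN b d s m.-1 by rewrite boE X1.
  rewrite bj bj1 bj2 oj oj1.
  split.
    move: Vj => /and3P[aP bP /and4P[aab aac abc cP]].
    rewrite /localBoundary /fullOcc aP bP aab aac abc /=.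
    by rewrite (negbTE cP).
  exists s, m; split => //.
  cbv zeta.
  rewrite ud dirTo_addN -o1.
  by split => //.
have onB j : onBoundary P (fullOcc P) (X j).1.1.
  exists B; split => //.
  by exists (j %% k)%N; rewrite ?sB ?ltn_pmod // buE per.
split; first by apply: (onB 0%N).
by have := onB 1%N; rewrite XS.
Qed.

End Bnd.
End Aux.

Module Main.
Import GRing.Theory Aux.
Local Open Scope ring_scope.

Lemma chir (P : seq node) pd u : configOK P pd -> u \in P ->
  exists2 e, pm1 e & forall k, pd u k = e * k.
Proof.
case=> _ _ Pinj P03 Padj uP.
have [p0 p3] := P03 u uP.
have H : forall k, (pd u (k + 1) == pd u k + 1) || (pd u (k + 1) == pd u k - 1).
  by move=> k; have := Padj u uP k; rewrite /nbp adj_addN.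
have [h1 h2] := portLin (Pinj u uP) p0 p3 H.
by exists (pd u 1).
Qed.

Lemma greyT pd a e ea eb : pm1 ea -> pm1 eb ->
  (forall k, pd a k = ea * k) -> (forall k, pd (addN a e) k = eb * k) ->
  e != 0 -> e != 3 -> greyTest pd a (addN a e) = (ea == eb).
Proof.
move=> pa pb ha hb e0 e3.
rewrite /greyTest (portTo_lin _ pa ha) -{2}(addN_back a e) (portTo_lin _ pb hb).
exact: grey_brute.
Qed.

Lemma horiz_dir P pd a b : configOK P pd -> horizEdge P pd a b ->
  b = addN a 0 \/ b = addN a 3.
Proof.
move=> cfg [aP bP _ _].
case: cfg => _ _ _ P03 _.
have [a0 a3] := P03 a aP; have [b0 b3] := P03 b bP.
rewrite /nbp a0 a3 b0 b3.
case=> /andP[/eqP h1 /eqP h2]; first by left.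
by right.
Qed.


Lemma comb_back' D sg : pm1 sg -> comb D (D + 3 + sg) (D - sg).
Proof. by case/orP=> /eqP ->; ord6 D. Qed.

Lemma hor_brute D sg : pm1 sg -> (D == 0) || (D == 3) ->
  [&& D + sg != 0, D + sg != 3, D - sg != 0 & D - sg != 3].
Proof. by case/orP=> /eqP ->; case/orP=> /eqP ->. Qed.

Lemma comb_w' D sg : pm1 sg -> comb (D + sg) (D - sg) D.
Proof. by case/orP=> /eqP ->; ord6 D. Qed.

Lemma lbAll G occ B : isBoundary G occ B -> forall j,
  localBoundary G occ (bu B j) (bu B j.+1) (bo B j).
Proof.
case=> B0 HB j.
have := HB (j %% size B)%N (ltn_pmod _ B0); case=> lb _.
move: lb; rewrite /bu /bo modn_mod -addn1 modnDml addn1.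
done.
Qed.

Lemma step_ok P pd G : configOK P pd -> greyComponent P pd G ->
  forall B, isBoundary G (occG P pd G) B -> forall j, (j < size B)%N ->
  step P pd G (bu B j, bu B j.+1, portTo pd (bu B j.+1) (bo B j)) =
  (bu B j.+1, bu B j.+2, portTo pd (bu B j.+2) (bo B j.+1)).
Proof.
move=> cfg gc B hB j jlt.
have lb1 := lbAll hB j.+1.
have := (hB.2 j jlt); cbv zeta; case=> _ [s [m [hm [o1 o2 w2 nocc]]]].
have lb := lbAll hB j.
move: lb lb1 o1 o2 w2 nocc.
set u := bu B j; set v := bu B j.+1; set w := bu B j.+2; set o := bo B j; set o' := bo B j.+1.
set d := dirTo v u.
move=> + + o1 o2 w2 nocc.
move=> /andP[uG /andP[vG /andP[auv /andP[ouv /andP[ovu /andP[auo /andP[avo /andP[nuo nvo]]]]]]]].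
move=> /andP[_ /andP[wG /andP[avw /andP[ovw /andP[owv /andP[avo' /andP[awo' /andP[nvo' nwo']]]]]]]].
case: (gc) => _ GP _ Gmax.
have uP := GP _ uG; have vP := GP _ vG; have wP := GP _ wG.
have ud : u = addN v d by apply: adj_dirTo; apply: adj_sym.
clearbody u v w o o' d.
have [e1 pe1 pi1] := chir cfg vP.
have [e2 pe2 pi2] := chir cfg wP.
have pS : pm1 (sgn s) by apply: pm1_sgn.
move: (sgn s) (rotNE v d s) pS => sg rE pS.
have [D eD] : exists D, D = d + sg * m%:R by eexists.
have wD : w = addN v D by rewrite -w2 rE -eD.
have oD : o' = addN v (D - sg).
  rewrite -o2 rE eD natm1; first by congr addN; ring.
  by case/andP: hm => /ltnW.
have hz : portTo pd v u = e1 * d by rewrite ud (portTo_lin _ pe1 pi1).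
have hl : portTo pd v o = e1 * (d + sg) by rewrite -o1 rE mulr1 (portTo_lin _ pe1 pi1).
rewrite /step hz hl.
have hp t : nbp pd v (e1 * d + (e1 * (d + sg) - e1 * d) *+ t) = rotN v d s t.
  rewrite /nbp pi1 rE; congr addN; rewrite -mulr_natr.
  have -> : e1 * (e1 * d + (e1 * (d + sg) - e1 * d) * t%:R) = (e1 * e1) * (d + sg * t%:R) by ring.
  by rewrite pm1_sq // mul1r.
have m1 : (1 <= m)%N by case/andP: hm => /ltnW.
have fm : (find (fun t => occG P pd G v (nbp pd v (e1 * d + (e1 * (d + sg) - e1 * d) *+ t))) (iota 1 6)).+1 = m.
  rewrite (eq_find (a2 := fun t => occG P pd G v (rotN v d s t))); last by move=> t; rewrite /= hp.
  apply: find_iota => //; first by case/andP: hm => /ltnW -> ->.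
  by rewrite w2.
rewrite fm.
have hx : e1 * d + (e1 * (d + sg) - e1 * d) *+ m = e1 * D by rewrite eD -mulr_natr; ring.
have hi : e1 * d + (e1 * (d + sg) - e1 * d) *+ m.-1 = e1 * (D - sg).
  by rewrite eD -mulr_natr natm1 //; ring.
rewrite hx hi.
have hw : nbp pd v (e1 * D) = w by rewrite /nbp pi1 mulrA pm1_sq // mul1r wD.
have hw1 : nbp pd v (e1 * D + 1) = addN v (D + e1).
  by rewrite /nbp pi1 mulrDr mulrA pm1_sq // mul1r mulr1.
have hw2 : nbp pd v (e1 * D - 1) = addN v (D - e1).
  by rewrite /nbp pi1 mulrBr mulrA pm1_sq // mul1r mulr1.
rewrite hw hw1 hw2.
have vw : v = addN w (D + 3) by rewrite wD addN_back.
have hy : portTo pd w v = e2 * (D + 3) by rewrite [X in portTo _ _ X]vw (portTo_lin _ pe2 pi2).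
have ow : o' = addN w (D + 3 + sg).
  by apply/eqP; rewrite oD wD eq_sym addN2 comb_back'.
have ho : portTo pd w o' = e2 * (D + 3 + sg) by rewrite ow (portTo_lin _ pe2 pi2).
rewrite hy ho.
have hsame : (if `[< lightBlue P pd v w >] then greyTest pd v (if addN v (D + e1) \in P then addN v (D + e1) else addN v (D - e1)) == greyTest pd (if addN v (D + e1) \in P then addN v (D + e1) else addN v (D - e1)) w else greyTest pd v w) = (e1 == e2).
  have Dhor : lightBlue P pd v w -> (D == 0) || (D == 3).
    case=> he _; case: (horiz_dir cfg he); rewrite wD => /addN_inj ->; by rewrite eqxx ?orbT.
  have o'nP : (D == 0) || (D == 3) -> o' \notin P.
    move=> hD; apply/negP => o'P.
    have ndb : ~ darkBlue P pd v o'.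
      case=> he _; case/and4P: (hor_brute pS hD) => _ _ n0 n3.
      by case: (horiz_dir cfg he); rewrite oD => /addN_inj h; rewrite h eqxx in n0 n3.
    have o'G := Gmax v o' vG o'P avo' ndb.
    by move: nvo'; rewrite /occG o'G (asboolF ndb).
  have cnb x : x \in P -> adj v x && adj w x -> o' \notin P -> x = addN v (D + sg).
    move=> xP /andP[avx awx] onP.
    have aDx : adj (addN v D) x by rewrite -wD.
    case: (common_nb avx aDx) => xe; case/orP: (pS) => /eqP es.
    - by rewrite es.
    - by move: onP; rewrite oD es opprK -xe xP.
    - by move: onP; rewrite oD es -xe xP.
    - by rewrite es.
  have LBiff : (D == 0) || (D == 3) -> lightBlue P pd v w.
    move=> hD; have onP := o'nP hD.
    have V : Valid P (v, w, o') by rewrite /Valid vP wP avw avo' awo' onP.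
    have [bv bw] := bnd_exists V.
    have he : horizEdge P pd v w.
      split => //.
      case: (cfg) => _ _ _ P03 _.
      have [v0 v3] := P03 v vP; have [w0 w3] := P03 w wP.
      rewrite /nbp v0 v3 w0 w3.
      case/orP: hD => /eqP D0; [left | right]; rewrite wD D0 eqxx /=.
        by rewrite -{2}(addN_back v 0) add0r.
      have e33 : (3 + 3 : 'I_6) = 0 by apply/val_inj.
      by rewrite andbT -[X in addN _ X]e33 addN_back.
    split => //.
    have le1 : (ncommon P v w <= 1)%N.
      rewrite /ncommon.
      rewrite (eq_in_count (a2 := fun x => (adj v x && adj w x) && (x \in P))); last first.
        by move=> x; rewrite mem_undup => ->; rewrite andbT.
      apply: (@leq_trans (count (pred1 (addN v (D + sg))) (undup P))).
        apply: sub_count => x /andP[ax xP] /=; apply/eqP; exact: cnb.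
      by rewrite (count_uniq_mem _ (undup_uniq P)) leq_b1.
    have ne0 : ncommon P v w != 0%N.
      apply/negP => /eqP n0.
      by move: ovw; rewrite /occG wG (asboolT (conj he n0)).
    by apply/eqP; rewrite eqn_leq le1 lt0n ne0.
  have [LB|NLB] := asboolP (lightBlue P pd v w).

    have hD := Dhor LB.
    have [dl [pdl [w0P ew0]]] : exists dl, pm1 dl /\ (addN v (D + dl) \in P /\
        (if addN v (D + e1) \in P then addN v (D + e1) else addN v (D - e1)) = addN v (D + dl)).
      case: ifP => h; first by exists e1.
      exists (- e1); split; first by case/orP: pe1 => /eqP ->; rewrite /pm1 ?opprK eqxx ?orbT.
      split => //.
      case: LB => _ /eqP; rewrite /ncommon => /eqP c1.
      have : has (fun x => adj v x && adj w x) (undup P) by rewrite has_count c1.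
      case/hasP => x; rewrite mem_undup => xP /andP[avx awx].
      have aDx : adj (addN v D) x by rewrite -wD.
      case: (common_nb avx aDx) => xe; case/orP: (pe1) => /eqP es.
      - by move: h; rewrite es -xe xP.
      - by rewrite es opprK -xe.
      - by rewrite es -xe.
      - by move: h; rewrite es -xe xP.
    rewrite ew0.
    have [ew pew piw] := chir cfg w0P.
    case/and4P: (hor_brute pdl hD) => n1 n2 n3 n4.
    rewrite (greyT pe1 pew pi1 piw) //.
    have wE : addN (addN v (D + dl)) (D - dl) = w by apply/eqP; rewrite wD addN2 comb_w'.
    rewrite -wE (greyT pew pe2 piw) //; last by rewrite wE.
    exact: same_brute.

  have hD : ~~ ((D == 0) || (D == 3)) by apply/negP => /LBiff.
  move: hD; rewrite negb_or => /andP[n0 n3].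
  rewrite wD (greyT pe1 pe2 pi1) //; by rewrite -wD.
by rewrite hsame (eqP (final_brute D pe1 pe2 pS)).
Qed.

Lemma step_all P pd G : configOK P pd -> greyComponent P pd G ->
  forall B, isBoundary G (occG P pd G) B -> forall j,
  step P pd G (bu B j, bu B j.+1, portTo pd (bu B j.+1) (bo B j)) =
  (bu B j.+1, bu B j.+2, portTo pd (bu B j.+2) (bo B j.+1)).
Proof.
move=> cfg gc B hB j.
have B0 := hB.1.
have := step_ok cfg gc hB (ltn_pmod j B0).
have e0 : bu B (j %% size B) = bu B j by rewrite /bu modn_mod.
have e1 : bu B (j %% size B).+1 = bu B j.+1 by rewrite /bu -[(j %% size B).+1]addn1 -[j.+1]addn1 modnDml.
have e2 : bu B (j %% size B).+2 = bu B j.+2 by rewrite /bu -[(j %% size B).+2]addn2 -[j.+2]addn2 modnDml.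
have f0 : bo B (j %% size B) = bo B j by rewrite /bo modn_mod.
have f1 : bo B (j %% size B).+1 = bo B j.+1 by rewrite /bo -[(j %% size B).+1]addn1 -[j.+1]addn1 modnDml.
by rewrite e0 e1 e2 f0 f1.
Qed.

End Main.

Unset Implicit Arguments.

Theorem theorem2 (P : seq node) (portDir : node -> 'I_6 -> 'I_6) (G : seq node) :
  configOK P portDir ->
  greyComponent P portDir G ->
  forall B : seq (node * node),
    isBoundary G (occG P portDir G) B ->
    forall (i0 n : nat) (p p' o : node),
      bu B (i0 + n) = p -> bu B (i0 + n).+1 = p' -> bo B (i0 + n) = o ->
      traj P portDir G (initMsg portDir B i0) n = (p, p', portTo portDir p' o).
Proof.
move=> cfg gc B hB i0 n p p' o <- <- <-.
elim: n => [|n IH]; first by rewrite addn0.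
rewrite addnS.
transitivity (step P portDir G (traj P portDir G (initMsg portDir B i0) n)); first by [].
by rewrite IH (Main.step_all cfg gc hB).
Qed.
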